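(* Let $\alpha, \beta, \gamma \in (0,1)$ with $\gamma < \min\{\frac{\alpha}{\beta}, \frac{\beta}{\alpha}\}$. Then: (1) for $d$ sufficiently large, $W(\alpha, \beta, \gamma)$ is decreasing in $\alpha$ and in $\beta$ and increasing in $\gamma$; (2) for $d$ sufficiently large, $W(\alpha, \beta, \beta)$ is decreasing in $\beta$.
   Context: For $\alpha,\beta,\gamma\in(0,1)$, $W(\alpha,\beta,\gamma) = \Pr_{X \sim \mathcal{U}(\mathcal{S}^{d-1})} (X_1 > \alpha,\ X_1 \gamma + X_2 \sqrt{1 - \gamma^2} > \beta)$, where $\mathcal{U}(\mathcal{S}^{d-1})$ is the uniform distribution on the Euclidean unit sphere in $\mathbb{R}^d$; equivalently, the relative volume of the intersection of the spherical caps $\{u:\langle u,x\rangle\ge\alpha\}$ and $\{u:\langle u,y\rangle\ge\beta\}$ for unit vectors $x,y$ with $\langle x,y\rangle=\gamma$. For $0<\gamma\le\min\{\alpha/\beta,\beta/\alpha\}$ one has $W(\alpha,\beta,\gamma)=d^{\Theta(1)}\left(\frac{1-\alpha^2-\beta^2-\gamma^2+2\alpha\beta\gamma}{1-\gamma^2}\right)^{d/2}$; the monotonicity is understood for this asymptotic expression (ignoring the $d^{\Theta(1)}$ factor). *)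

(* Defs.v *)
From mathcomp Require Import all_boot all_order all_algebra.
Set Implicit Arguments. Unset Strict Implicit. Unset Printing Implicit Defensive.
Import Order.TTheory GRing.Theory Num.Theory.
Local Open Scope ring_scope.

Definition Wbase (R : rcfType) (a b g : R) : R :=
  (1 - a ^+ 2 - b ^+ 2 - g ^+ 2 + 2 * a * b * g) / (1 - g ^+ 2).

(* The asymptotic expression (Wbase)^(d/2), written as (sqrt Wbase)^d.
   Num.sqrt is 0 on negatives, so this equals max(Wbase,0)^(d/2)
   (the caps are then disjoint / the expression degenerate). *)
Definition Wasym (R : rcfType) (d : nat) (a b g : R) : R :=
  Num.sqrt (Wbase a b g) ^+ d.

Definition admissible (R : rcfType) (a b g : R) : Prop :=
  [/\ 0 < a < 1, 0 < b < 1, 0 < g < 1, g < a / b & g < b / a].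

(* Main.v *)
Require Import Defs.
From mathcomp Require Import all_boot all_order all_algebra.
From mathcomp Require Import ring lra.
Import Order.TTheory GRing.Theory Num.Theory.
Local Open Scope ring_scope.

Lemma key {R : rcfType} d (x1 x2 : R) : (0 < d)%N -> x2 < x1 ->
  Num.sqrt x2 ^+ d <= Num.sqrt x1 ^+ d /\
  (0 < Num.sqrt x1 ^+ d -> Num.sqrt x2 ^+ d < Num.sqrt x1 ^+ d).
Proof.
move=> d0 lt12; split.
  apply: lerXn2r; rewrite ?nnegrE ?sqrtr_ge0 //; apply: ler_wsqrtr; exact: ltW.
move=> H.
have s1 : 0 < Num.sqrt x1.
  rewrite lt_neqAle sqrtr_ge0 andbT; apply/eqP => E.
  by move: H; rewrite -E expr0n; case: d d0 => [|n] //= _; rewrite ltxx.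
have x1p : 0 < x1 by rewrite -sqrtr_gt0.
rewrite ltrXn2r ?sqrtr_ge0 ?ltr_sqrt //.
by rewrite -lt0n.
Qed.

Lemma admP (R : rcfType) (a b g : R) : admissible a b g ->
  [/\ 0 < a, a < 1, 0 < b, b < 1 & [/\ 0 < g, g < 1, g * b < a & g * a < b]].
Proof.
case=> /andP[a0 a1] /andP[b0 b1] /andP[g0 g1].
by rewrite !ltr_pdivlMr // => h1 h2; split.
Qed.

Lemma Wa (R : rcfType) (a1 a2 b g : R) : admissible a1 b g -> admissible a2 b g ->
  a1 < a2 -> Wbase a2 b g < Wbase a1 b g.
Proof.
move=> /admP[? ? ? ? [g0 g1 h1 h2]] /admP[? ? ? ? [? ? h3 h4]] lt.
have D : 0 < 1 - g ^+ 2 by rewrite subr_gt0 expr2; apply: mulr_ilt1 => //; apply: ltW.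
rewrite /Wbase ltr_pM2r ?invr_gt0 //.
have P : 0 < (a2 - a1) * (a2 + a1 - 2 * (g * b)) by apply: mulr_gt0; lra.
rewrite -subr_gt0; apply: (lt_le_trans P); rewrite le_eqVlt; apply/orP; left; apply/eqP; ring.
Qed.

Lemma Wb (R : rcfType) (a b1 b2 g : R) : admissible a b1 g -> admissible a b2 g ->
  b1 < b2 -> Wbase a b2 g < Wbase a b1 g.
Proof.
move=> /admP[? ? ? ? [g0 g1 h1 h2]] /admP[? ? ? ? [? ? h3 h4]] lt.
have D : 0 < 1 - g ^+ 2 by rewrite subr_gt0 expr2; apply: mulr_ilt1 => //; apply: ltW.
rewrite /Wbase ltr_pM2r ?invr_gt0 //.
have P : 0 < (b2 - b1) * (b2 + b1 - 2 * (g * a)) by apply: mulr_gt0; lra.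
rewrite -subr_gt0; apply: (lt_le_trans P); rewrite le_eqVlt; apply/orP; left; apply/eqP; ring.
Qed.

Lemma Wg (R : rcfType) (a b g1 g2 : R) : admissible a b g1 -> admissible a b g2 ->
  g1 < g2 -> Wbase a b g1 < Wbase a b g2.
Proof.
move=> /admP[? ? ? ? [? ? h1 h2]] /admP[? ? ? ? [? ? h3 h4]] lt.
have D1 : 0 < 1 - g1 ^+ 2 by rewrite subr_gt0 expr2; apply: mulr_ilt1 => //; apply: ltW.
have D2 : 0 < 1 - g2 ^+ 2 by rewrite subr_gt0 expr2; apply: mulr_ilt1 => //; apply: ltW.
rewrite /Wbase ltr_pdivrMr // [_ / _ * _]mulrAC ltr_pdivlMr //.
have P : 0 < (b - a * g1) * (a - b * g2) + (b - a * g2) * (a - b * g1).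
  apply: addr_gt0; apply: mulr_gt0; lra.
have Q : 0 < (g2 - g1) * ((b - a * g1) * (a - b * g2) + (b - a * g2) * (a - b * g1)).
  apply: mulr_gt0; lra.
rewrite -subr_gt0; apply: (lt_le_trans Q); rewrite le_eqVlt; apply/orP; left; apply/eqP; ring.
Qed.

Lemma Wd (R : rcfType) (b1 b2 : R) : 0 < b1 -> b1 < b2 -> b2 < 1 ->
  0 < Wbase b1 b1 b1 /\ Wbase b2 b2 b2 < Wbase b1 b1 b1.
Proof.
move=> p lt q.
have D1 : 0 < 1 - b1 ^+ 2 by rewrite subr_gt0 expr2; apply: mulr_ilt1 => //; lra.
have D2 : 0 < 1 - b2 ^+ 2 by rewrite subr_gt0 expr2; apply: mulr_ilt1 => //; lra.
split.
  rewrite /Wbase divr_gt0 //.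
  have P : 0 < (1 - b1) * (1 - b1) * (1 + 2 * b1) by rewrite !mulr_gt0 //; lra.
  apply: (lt_le_trans P); rewrite le_eqVlt; apply/orP; left; apply/eqP; ring.
rewrite /Wbase ltr_pdivrMr // [_ / _ * _]mulrAC ltr_pdivlMr //.
have P : 0 < (1 - b1) * (1 - b2) * (2 * (b2 - b1)) * (b1 + b2 + b1 * b2).
  by rewrite !mulr_gt0 //; nra.
rewrite -subr_gt0; apply: (lt_le_trans P); rewrite le_eqVlt; apply/orP; left; apply/eqP; ring.
Qed.

Theorem lemma4 (R : rcfType) :
  exists d0 : nat, forall d : nat, (d0 <= d)%N ->
    (* (1a) decreasing in alpha *)
    (forall a1 a2 b g : R, admissible a1 b g -> admissible a2 b g -> a1 < a2 ->
       Wasym d a2 b g <= Wasym d a1 b g /\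
       (0 < Wasym d a1 b g -> Wasym d a2 b g < Wasym d a1 b g)) /\
    (* (1b) decreasing in beta *)
    (forall a b1 b2 g : R, admissible a b1 g -> admissible a b2 g -> b1 < b2 ->
       Wasym d a b2 g <= Wasym d a b1 g /\
       (0 < Wasym d a b1 g -> Wasym d a b2 g < Wasym d a b1 g)) /\
    (* (1c) increasing in gamma *)
    (forall a b g1 g2 : R, admissible a b g1 -> admissible a b g2 -> g1 < g2 ->
       Wasym d a b g1 <= Wasym d a b g2 /\
       (0 < Wasym d a b g2 -> Wasym d a b g1 < Wasym d a b g2)) /\
    (* (2) W(beta,beta,beta) decreasing in beta *)
    (forall b1 b2 : R, 0 < b1 -> b1 < b2 -> b2 < 1 ->
       Wasym d b2 b2 b2 < Wasym d b1 b1 b1).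
Proof.
exists 1%N => d d0; split; [|split; [|split]].
- by move=> a1 a2 b g h1 h2 lt; apply: key => //; apply: Wa h1 h2 lt.
- by move=> a b1 b2 g h1 h2 lt; apply: key => //; apply: Wb h1 h2 lt.
- by move=> a b g1 g2 h1 h2 lt; apply: key => //; apply: Wg h1 h2 lt.
- move=> b1 b2 p lt q; have [pos W] := @Wd R b1 b2 p lt q.
  have [_ H] := key _ _ _ d0 W; apply: H.
  by rewrite /Wasym exprn_gt0 // sqrtr_gt0.
Qed.
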